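(* Let $d\ge2$, $r\ge1$, $l_1,\dots,l_r\in\{1,\dots,d\}$ with $\sum_{j=1}^r l_j\le d$, and $l=d-\sum_{j=1}^r(l_j-1)$. Let $A\in\mathbf S(d;l_1,\dots,l_r)$ have a spectral decomposition $A=PDP^*$ with $P\in\mathbf O(d)$ and $D$ a real diagonal $d\times d$ matrix, and suppose $A$ has exactly $l$ distinct eigenvalues. Then for every $\varepsilon>0$ there is $\delta>0$ such that for every $B\in\mathbf S(d;l_1,\dots,l_r)$ with $\max_{1\le i,j\le d}|A_{i,j}-B_{i,j}|<\delta$, the matrix $B$ has exactly $l$ distinct eigenvalues and admits a spectral decomposition $B=QFQ^*$ with $Q\in\mathbf O(d)$, $F$ real diagonal, such that $\max_{1\le i\le d}|D_{i,i}-F_{i,i}|<\varepsilon$ and $\max_{1\le i,j\le d}|Q_{i,j}-P_{i,j}|<\varepsilon$.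
   Context: $\mathbf O(d)$ is the group of real orthogonal $d\times d$ matrices. For a real symmetric $d\times d$ matrix $x$ let $E_1(x)\le\cdots\le E_d(x)$ be its eigenvalues. $\mathbf S(d;l_1,\dots,l_r)$ is the set of real symmetric $d\times d$ matrices $x$ for which there exist pairwise disjoint $J_1,\dots,J_r\subseteq\{1,\dots,d\}$ with $|J_j|=l_j$ such that, for each $j$, the values $E_i(x)$, $i\in J_j$, are all equal. *)

(* Defs.v *)
From HB Require Import structures.
From mathcomp Require Import all_boot all_order all_algebra.
From mathcomp Require Import reals.
Set Implicit Arguments. Unset Strict Implicit. Unset Printing Implicit Defensive.
Import Order.TTheory GRing.Theory Num.Theory.
Local Open Scope ring_scope.

Definition sym_mx (R : realType) (d : nat) (x : 'M[R]_d) : Prop := x^T = x.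

Definition orthogonal_mx (R : realType) (d : nat) (P : 'M[R]_d) : Prop :=
  P *m P^T = 1%:M.

(* s = [:: E_1(x); ...; E_d(x)] : the eigenvalues of x listed with algebraic
   multiplicity in nondecreasing order (i.e. the roots of the characteristic
   polynomial, which splits over R for symmetric x). *)
Definition ordered_eigs (R : realType) (d : nat) (x : 'M[R]_d) (s : seq R) : Prop :=
  sorted <=%R s /\ char_poly x = \prod_(a <- s) ('X - a%:P).

(* x \in S(d; l_1, ..., l_r); index i : 'I_d stands for i+1 in {1..d} *)
Definition in_S (R : realType) (d r : nat) (lv : 'I_r -> nat) (x : 'M[R]_d) : Prop :=
  sym_mx x /\
  exists s : seq R, ordered_eigs x s /\
  exists J : 'I_r -> {set 'I_d},
    (forall j, #|J j| = lv j) /\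
    (forall j k, j != k -> [disjoint J j & J k]) /\
    (forall j (i1 i2 : 'I_d), i1 \in J j -> i2 \in J j -> nth 0 s i1 = nth 0 s i2).

Definition n_distinct_eigs (R : realType) (d : nat) (x : 'M[R]_d) (k : nat) : Prop :=
  exists s : seq R, uniq s /\ size s = k /\ (forall a, eigenvalue x a <-> a \in s).

(* Main.v *)
Require Import Defs.
From HB Require Import structures.
From mathcomp Require Import all_boot all_order all_algebra.
From mathcomp Require Import reals.
From mathcomp Require Import zify lra.
Import Order.TTheory GRing.Theory Num.Theory.
Local Open Scope ring_scope.

Set Implicit Arguments. Unset Strict Implicit. Unset Printing Implicit Defensive.

Lemma disj_bigcup_seq (T : finType) (I : eqType) (s : seq I) (X : I -> {set T}) (A : {set T}) :
  (forall i, i \in s -> [disjoint A & X i]) -> [disjoint A & \bigcup_(i <- s) X i].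
Proof.
elim: s => [|a s IH] H; rewrite -setI_eq0; first by rewrite big_nil setI0.
rewrite big_cons setIUr (disjoint_setI0 (H a _)) ?inE ?eqxx //.
rewrite (disjoint_setI0 (IH _)) ?setU0 //.
by move=> i si; apply: H; rewrite inE si orbT.
Qed.

Lemma card_bigcup_disj (T : finType) (I : eqType) (s : seq I) (X : I -> {set T}) :
  uniq s -> (forall i j, i \in s -> j \in s -> i != j -> [disjoint X i & X j]) ->
  #|\bigcup_(i <- s) X i| = (\sum_(i <- s) #|X i|)%N.
Proof.
elim: s => [|a s IH] /= ; first by rewrite !big_nil cards0.
move=> /andP[nas us] H.
rewrite !big_cons cardsU.
have -> : X a :&: \bigcup_(i <- s) X i = set0.
  apply/eqP; rewrite setI_eq0; apply: disj_bigcup_seq => i si.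
  apply: H; rewrite ?inE ?eqxx ?si ?orbT //.
  by apply/eqP => ai; move: nas; rewrite ai si.
rewrite cards0 subn0 IH //.
by move=> i j si sj; apply: H; rewrite inE ?si ?sj orbT.
Qed.

Lemma count_distinct (R : realType) (n r : nat) (lv : 'I_r -> nat) (s : seq R)
  (J : 'I_r -> {set 'I_n}) :
  size s = n ->
  (forall j, (1 <= lv j)%N) ->
  (forall j, #|J j| = lv j) ->
  (forall j k, j != k -> [disjoint J j & J k]) ->
  (forall j (i1 i2 : 'I_n), i1 \in J j -> i2 \in J j -> nth 0 s i1 = nth 0 s i2) ->
  (size (undup s) <= n - \sum_(j < r) (lv j).-1)%N.
Proof.
move=> ss lv1 cJ dJ cst.
have rep : forall j, exists x, x \in J j.
  move=> j; apply/set0Pn; rewrite -card_gt0 cJ; exact: lv1.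
pose rp j := xchoose (rep j).
have rpJ j : rp j \in J j := xchooseP (rep j).
pose U := \bigcup_(j <- enum 'I_r) (J j :\ rp j).
have cU : #|U| = (\sum_(j < r) (lv j).-1)%N.
  rewrite /U card_bigcup_disj ?enum_uniq //; last first.
    move=> i j _ _ ij; apply: disjointWl (subsetDl _ _) _.
    by apply: disjointWr (subsetDl _ _) _; apply: dJ.
  rewrite big_enum /=; apply: eq_bigr => j _.
  by rewrite -cJ (cardsD1 (rp j)) rpJ.
have cT : #|~: U| = (n - \sum_(j < r) (lv j).-1)%N.
  by have := cardsC U; rewrite card_ord cU; lia.
rewrite -cT cardE -(size_map (fun i : 'I_n => nth 0 s i)).
apply: uniq_leq_size; first exact: undup_uniq.
move=> x; rewrite mem_undup => /(nthP 0) [k ks <-].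
rewrite ss in ks.
have [kU | kU] := boolP (Ordinal ks \in U).
  move: kU; rewrite /U bigcup_seq => /bigcupP [j _] /setD1P [_ kJ].
  apply/mapP; exists (rp j).
    rewrite mem_enum in_setC /U;  apply/bigcupP => -[i _ /setD1P[ri riJ]].
    have [ij|ij] := eqVneq i j; first by rewrite ij eqxx in ri.
    by move: (dJ _ _ ij) => /disjointFr /(_ riJ); rewrite rpJ.
  exact: (cst j (Ordinal ks) (rp j) kJ (rpJ j)).
apply/mapP; exists (Ordinal ks) => //.
by rewrite mem_enum inE.
Qed.

Section SymAlg.
Variable R : realType.

Lemma sym_sq0 n (M : 'M[R]_n) : M^T = M -> M *m M = 0 -> M = 0.
Proof.
move=> sM MM; apply/matrixP => i j; rewrite mxE.
have : (M *m M) i i = 0 by rewrite MM mxE.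
rewrite mxE.
have -> : \sum_j0 M i j0 * M j0 i = \sum_j0 M i j0 ^+ 2.
  by apply: eq_bigr => k _; rewrite -{2}sM mxE expr2.
move/eqP; rewrite psumr_eq0; last by move=> k _; exact: sqr_ge0.
by move/allP => /(_ j (mem_index_enum _)) /implyP /(_ isT); rewrite sqrf_eq0 => /eqP.
Qed.

Lemma horner_sym n (B : 'M[R]_n.+1) (p : {poly R}) :
  B^T = B -> (horner_mx B p)^T = horner_mx B p.
Proof.
move=> sB; elim/poly_ind: p => [|p c IH]; first by rewrite rmorph0 trmx0.
rewrite rmorphD rmorphM /= horner_mx_X horner_mx_C linearD /= tr_scalar_mx.
congr (_ + _).
rewrite -[horner_mx B p * B]/(horner_mx B p *m B) trmx_mul sB IH.
have := comm_horner_mx2 B p 'X; rewrite horner_mx_X /GRing.comm => h.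
by rewrite -[B *m _]/(B * horner_mx B p) -h.
Qed.

Lemma trmxX n (M : 'M[R]_n.+1) k : M^T = M -> (M ^+ k)^T = M ^+ k.
Proof.
move=> sM; elim: k => [|k IH]; first by rewrite expr0 trmx1.
rewrite exprS -[M * M ^+ k]/(M *m M ^+ k) trmx_mul IH sM.
by rewrite -[_ *m M]/(M ^+ k * M) -exprSr exprS.
Qed.

Lemma sym_nil0 n (M : 'M[R]_n.+1) k : M^T = M -> M ^+ k = 0 -> M = 0.
Proof.
move=> sM Mk.
suff H : forall j, M ^+ (2 ^ j) = 0 -> M = 0.
  apply: (H k).
  have lk : (k <= 2 ^ k)%N by apply: ltnW; apply: ltn_expl.
  by rewrite -(subnK lk) exprD Mk mulr0.
elim=> [|j IH]; first by rewrite expn0 expr1.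
move=> Mj; apply: IH; apply: sym_sq0; first exact: trmxX.
by rewrite [_ *m _](_ : _ = M ^+ (2 ^ j) * M ^+ (2 ^ j)) // -exprD addnn -mul2n -expnS.
Qed.

Lemma eigvec_orth n (B : 'M[R]_n) (u v : 'rV[R]_n) (al be : R) :
  B^T = B -> u *m B = al *: u -> v *m B = be *: v -> al != be -> u *m v^T = 0.
Proof.
move=> sB hu hv ab.
have e1 : u *m B *m v^T = al *: (u *m v^T) by rewrite hu scalemxAl.
have e2 : u *m B *m v^T = be *: (u *m v^T).
  by rewrite -mulmxA -{1}sB -trmx_mul hv linearZ /= scalemxAr.
have : (al - be) *: (u *m v^T) = 0 by rewrite scalerBl -e1 -e2 subrr.
by move/eqP; rewrite scaler_eq0 subr_eq0 (negbTE ab) /= => /eqP.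
Qed.

Lemma qB0 n (B : 'M[R]_n.+1) (s bs : seq R) :
  B^T = B -> char_poly B = \prod_(z <- s) ('X - z%:P) -> {subset s <= bs} ->
  \prod_(y <- bs) (B - y%:M) = 0.
Proof.
move=> sB cB sub.
pose qp := \prod_(y <- bs) ('X - y%:P).
have hq : horner_mx B qp = \prod_(y <- bs) (B - y%:M).
  by rewrite rmorph_prod; apply: eq_bigr => y _; rewrite rmorphB /= horner_mx_X horner_mx_C.
rewrite -hq; apply: (@sym_nil0 _ _ (size s)); first exact: horner_sym.
have e : qp ^+ size s = (\prod_(z <- s) (qp %/ ('X - z%:P))) * char_poly B.
  have pc : forall (c : {poly R}) (t : seq R), \prod_(z <- t) c = c ^+ size t.
    by move=> c; elim=> [|z t IH]; rewrite ?big_nil ?expr0 // big_cons IH exprS.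
  rewrite cB -big_split /= -pc.
  apply: eq_big_seq => z zs; rewrite divpK //.
  by rewrite -root_factor_theorem root_prod_XsubC sub.
by rewrite -rmorphXn e rmorphM /= Cayley_Hamilton mulr0.
Qed.

End SymAlg.

Section GS.
Variables (R : realType) (n : nat).
Implicit Types (u v : 'rV[R]_n).

Lemma sum_delta K (j : 'I_K) (c : 'I_K -> R) :
  \sum_(m < K) c m * ((m : nat) == j)%:R = c j.
Proof.
rewrite (bigD1 j) //= eqxx mulr1 big1 ?addr0 // => m mj.
by rewrite (inj_eq val_inj) (negbTE mj) mulr0.
Qed.

Definition dot u v : R := (u *m v^T) 0 0.

Lemma dotC u v : dot u v = dot v u.
Proof. by rewrite /dot -{1}[u](trmxK) -trmx_mul mxE. Qed.

Lemma dotDl u v w : dot (u + v) w = dot u w + dot v w.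
Proof. by rewrite /dot mulmxDl mxE. Qed.
Lemma dotNl u w : dot (- u) w = - dot u w.
Proof. by rewrite /dot mulNmx mxE. Qed.
Lemma dotBl u v w : dot (u - v) w = dot u w - dot v w.
Proof. by rewrite dotDl dotNl. Qed.
Lemma dotZl a u w : dot (a *: u) w = a * dot u w.
Proof. by rewrite /dot -scalemxAl mxE. Qed.
Lemma dotZr a u w : dot w (a *: u) = a * dot w u.
Proof. by rewrite dotC dotZl dotC. Qed.
Lemma dot_suml (I : Type) (t : seq I) (P : pred I) (f : I -> 'rV[R]_n) w :
  dot (\sum_(i <- t | P i) f i) w = \sum_(i <- t | P i) dot (f i) w.
Proof.
elim: t => [|i t IH]; first by rewrite !big_nil /dot mul0mx mxE.
by rewrite !big_cons; case: (P i); rewrite ?dotDl IH.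
Qed.

Lemma dot_ge0 u : 0 <= dot u u.
Proof.
rewrite /dot mxE; apply: sumr_ge0 => i _; rewrite mxE -expr2; exact: sqr_ge0.
Qed.

Definition normz u := (Num.sqrt (dot u u))^-1 *: u.

Fixpoint gsq (w : nat -> 'rV[R]_n) (k : nat) : seq 'rV[R]_n :=
  if k is k'.+1 then
    let qs := gsq w k' in
    rcons qs (normz (w k' - \sum_(j < k') dot (w k') (nth 0 qs j) *: nth 0 qs j))
  else [::].

Definition gq w k := nth 0 (gsq w k.+1) k.

Lemma size_gsq w k : size (gsq w k) = k.
Proof. by elim: k => //= k IH; rewrite size_rcons IH. Qed.

Lemma nth_gsq w k j : (j < k)%N -> nth 0 (gsq w k) j = gq w j.
Proof.
elim: k => // k IH; rewrite ltnS leq_eqVlt => /orP [/eqP -> //|jk].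
by rewrite /= nth_rcons size_gsq jk IH.
Qed.

Definition gsu w k := w k - \sum_(j < k) dot (w k) (gq w j) *: gq w j.

Lemma gqE w k : gq w k = normz (gsu w k).
Proof.
rewrite /gq /= nth_rcons size_gsq ltnn eqxx /gsu; congr (normz (_ - _)).
by apply: eq_bigr => j _; rewrite nth_gsq.
Qed.

Lemma normz_dot u : 0 < dot u u -> dot (normz u) (normz u) = 1.
Proof.
move=> h; rewrite /normz dotZl dotZr mulrA -expr2 exprVn sqr_sqrtr ?ltW //.
by rewrite mulVf // gt_eqF.
Qed.

Lemma gs_orth w K : (forall k, (k < K)%N -> 0 < dot (gsu w k) (gsu w k)) ->
  forall i j, (i < K)%N -> (j < K)%N -> dot (gq w i) (gq w j) = (i == j)%:R.
Proof.
elim: K => // K IH pos.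
have IH' := IH (fun k kK => pos k (ltnW kK)).
have orth : forall j, (j < K)%N -> dot (gq w K) (gq w j) = 0.
  move=> j jK; rewrite gqE /normz dotZl; apply/eqP; rewrite mulf_eq0; apply/orP; right.
  rewrite /gsu dotBl dot_suml.
  rewrite (eq_bigr (fun m : 'I_K => dot (w K) (gq w m) * ((m : nat) == (Ordinal jK : nat))%:R)).
    by rewrite sum_delta subrr.
  by move=> m _; rewrite dotZl IH'.
move=> i j; rewrite !ltnS => hi hj.
have [iK|iK] := ltnP i K; have [jK|jK] := ltnP j K.
- exact: IH'.
- have -> : j = K by apply/eqP; rewrite eqn_leq hj jK.
  by rewrite dotC orth // (ltn_eqF iK).
- have -> : i = K by apply/eqP; rewrite eqn_leq hi iK.
  by rewrite orth // (gtn_eqF jK).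
- have -> : i = K by apply/eqP; rewrite eqn_leq hi iK.
  have -> : j = K by apply/eqP; rewrite eqn_leq hj jK.
  rewrite eqxx gqE normz_dot; [by [] | exact: pos].
Qed.

Lemma gs_eig (B : 'M[R]_n) (be : nat -> R) w :
  B^T = B -> (forall k, w k *m B = be k *: w k) ->
  forall k, gq w k *m B = be k *: gq w k.
Proof.
move=> sB hw.
have orthe : forall u v al bt, u *m B = al *: u -> v *m B = bt *: v -> al != bt -> dot u v = 0.
  move=> u v al bt hu hv ab.
  have e1 : u *m B *m v^T = al *: (u *m v^T) by rewrite hu scalemxAl.
  have e2 : u *m B *m v^T = bt *: (u *m v^T).
    by rewrite -mulmxA -{1}sB -trmx_mul hv linearZ /= scalemxAr.
  have : (al - bt) *: (u *m v^T) = 0 by rewrite scalerBl -e1 -e2 subrr.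
  move/eqP; rewrite scaler_eq0 subr_eq0 (negbTE ab) /= => /eqP h.
  by rewrite /dot h mxE.
suff H : forall K k, (k <= K)%N -> gq w k *m B = be k *: gq w k.
  by move=> k; exact: (H k).
elim=> [|K IH] k.
  rewrite leqn0 => /eqP ->; rewrite gqE /normz -scalemxAl /gsu big_ord0 subr0 hw.
  by rewrite !scalerA mulrC.
rewrite leq_eqVlt => /orP [/eqP -> | ]; last by rewrite ltnS; exact: IH.
rewrite gqE /normz -scalemxAl scalerA mulrC -scalerA; congr (_ *: _).
rewrite /gsu mulmxBl hw mulmx_suml scalerBr; congr (_ - _).
rewrite scaler_sumr; apply: eq_bigr => j _.
have hj : gq w j *m B = be j *: gq w j by apply: IH; rewrite -ltnS.
have [e|ne] := eqVneq (be j) (be K.+1).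
  by rewrite -scalemxAl hj e !scalerA mulrC.
rewrite (orthe _ _ _ _ (hw K.+1) hj); last by rewrite eq_sym.
by rewrite !scale0r mul0mx scaler0.
Qed.

End GS.

From mathcomp Require Import boolp classical_sets topology normedtype realfun matrix_normedtype.
Import numFieldTopology.Exports numFieldNormedType.Exports.

Open Scope classical_set_scope.

Section Lim.
Variables (R : realType) (T : Type) (F : set_system T).
Context {FF : Filter F}.

Definition mcvg m n (f : T -> 'M[R]_(m, n)) (C : 'M[R]_(m, n)) :=
  forall i j, (fun x => f x i j) @ F --> (C i j : R).

Lemma cvgDR (f g : T -> R) (a b : R) : f @ F --> a -> g @ F --> b ->
  (fun x => f x + g x) @ F --> a + b.
Proof. exact: cvgD. Qed.
Lemma cvgNR (f : T -> R) (a : R) : f @ F --> a -> (fun x => - f x) @ F --> - a.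
Proof. exact: cvgN. Qed.
Lemma cvgMR (f g : T -> R) (a b : R) : f @ F --> a -> g @ F --> b ->
  (fun x => f x * g x) @ F --> a * b.
Proof. exact: cvgM. Qed.
Lemma cvgVR (f : T -> R) (a : R) : a != 0 -> f @ F --> a -> (fun x => (f x)^-1) @ F --> a^-1.
Proof. exact: cvgV. Qed.
Lemma cvgcR (a : R) : (fun _ : T => a) @ F --> a.
Proof. exact: cvg_cst. Qed.
Lemma cvgsqrtR (f : T -> R) (a : R) : f @ F --> a -> (fun x => Num.sqrt (f x)) @ F --> Num.sqrt a.
Proof. move=> h; apply: continuous_cvg => //; exact: sqrt_continuous. Qed.

Lemma cvg_sumR (I : eqType) (t : seq I) (P : pred I) (f : I -> T -> R) (c : I -> R) :
  (forall i, i \in t -> f i @ F --> c i) ->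
  (fun x => \sum_(i <- t | P i) f i x) @ F --> \sum_(i <- t | P i) c i.
Proof.
elim: t => [|i t IH] H.
  rewrite big_nil; under eq_fun do rewrite big_nil; exact: cvgcR.
rewrite big_cons; under eq_fun do rewrite big_cons.
have IH' := IH (fun j jt => H j (introT orP (or_intror jt))).
case: (P i); last exact: IH'.
by apply: cvgDR => //; apply: H; rewrite inE eqxx.
Qed.

Lemma cvg_prodR (I : eqType) (t : seq I) (P : pred I) (f : I -> T -> R) (c : I -> R) :
  (forall i, i \in t -> f i @ F --> c i) ->
  (fun x => \prod_(i <- t | P i) f i x) @ F --> \prod_(i <- t | P i) c i.
Proof.
elim: t => [|i t IH] H.
  rewrite big_nil; under eq_fun do rewrite big_nil; exact: cvgcR.
rewrite big_cons; under eq_fun do rewrite big_cons.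
have IH' := IH (fun j jt => H j (introT orP (or_intror jt))).
case: (P i); last exact: IH'.
by apply: cvgMR => //; apply: H; rewrite inE eqxx.
Qed.

Lemma mcvg_cst m n (C : 'M[R]_(m, n)) : mcvg (fun _ => C) C.
Proof. move=> i j; exact: cvgcR. Qed.

Lemma mcvgD m n (f g : T -> 'M[R]_(m, n)) A B : mcvg f A -> mcvg g B ->
  mcvg (fun x => f x + g x) (A + B).
Proof.
move=> hf hg i j; rewrite mxE; under eq_fun do rewrite mxE; exact: cvgDR.
Qed.

Lemma mcvgN m n (f : T -> 'M[R]_(m, n)) A : mcvg f A -> mcvg (fun x => - f x) (- A).
Proof.
move=> hf i j; rewrite mxE; under eq_fun do rewrite mxE; exact: cvgNR.
Qed.

Lemma mcvgB m n (f g : T -> 'M[R]_(m, n)) A B : mcvg f A -> mcvg g B ->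
  mcvg (fun x => f x - g x) (A - B).
Proof. by move=> hf hg; apply: mcvgD => //; apply: mcvgN. Qed.

Lemma mcvgZ m n (k : T -> R) (f : T -> 'M[R]_(m, n)) (c : R) A : k @ F --> c -> mcvg f A ->
  mcvg (fun x => k x *: f x) (c *: A).
Proof.
move=> hk hf i j; rewrite mxE; under eq_fun do rewrite mxE; exact: cvgMR.
Qed.

Lemma mcvg_scalar n (k : T -> R) (c : R) : k @ F --> c -> mcvg (fun x => (k x)%:M : 'M_n) c%:M.
Proof.
move=> hk i j; rewrite mxE; under eq_fun do rewrite mxE.
case: (i == j); rewrite ?mulr1n ?mulr0n //; exact: cvgcR.
Qed.

Lemma mcvg_mul m n p (f : T -> 'M[R]_(m, n)) (g : T -> 'M[R]_(n, p)) A B :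
  mcvg f A -> mcvg g B -> mcvg (fun x => f x *m g x) (A *m B).
Proof.
move=> hf hg i j; rewrite mxE; under eq_fun do rewrite mxE.
apply: cvg_sumR => k _; exact: cvgMR.
Qed.

Lemma mcvg_prod n (I : eqType) (t : seq I) (P : pred I) (f : I -> T -> 'M[R]_n.+1)
   (C : I -> 'M[R]_n.+1) :
  (forall i, i \in t -> mcvg (f i) (C i)) ->
  mcvg (fun x => \prod_(i <- t | P i) f i x) (\prod_(i <- t | P i) C i).
Proof.
elim: t => [|i t IH] H.
  rewrite big_nil; under eq_fun do rewrite big_nil; exact: mcvg_cst.
rewrite big_cons; under eq_fun do rewrite big_cons.
have IH' := IH (fun j jt => H j (introT orP (or_intror jt))).
case: (P i); last exact: IH'.
by apply: mcvg_mul => //; apply: H; rewrite inE eqxx.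
Qed.

Lemma cvg_det n (f : T -> 'M[R]_n) A : mcvg f A -> (fun x => \det (f x)) @ F --> \det A.
Proof.
move=> hf; rewrite /determinant; under eq_fun do rewrite /determinant.
apply: cvg_sumR => s _; apply: cvgMR; first exact: cvgcR.
by apply: cvg_prodR => i _; apply: hf.
Qed.

Lemma mcvg_tr m n (f : T -> 'M[R]_(m, n)) A : mcvg f A -> mcvg (fun x => (f x)^T) A^T.
Proof. move=> hf i j; rewrite mxE; under eq_fun do rewrite mxE; exact: hf. Qed.

Lemma mcvg_sum m n (I : eqType) (t : seq I) (P : pred I) (f : I -> T -> 'M[R]_(m, n))
   (C : I -> 'M[R]_(m, n)) :
  (forall i, i \in t -> mcvg (f i) (C i)) ->
  mcvg (fun x => \sum_(i <- t | P i) f i x) (\sum_(i <- t | P i) C i).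
Proof.
elim: t => [|i t IH] H.
  rewrite big_nil; under eq_fun do rewrite big_nil; exact: mcvg_cst.
rewrite big_cons; under eq_fun do rewrite big_cons.
have IH' := IH (fun j jt => H j (introT orP (or_intror jt))).
case: (P i); last exact: IH'.
by apply: mcvgD => //; apply: H; rewrite inE eqxx.
Qed.

End Lim.

Close Scope classical_set_scope.

Open Scope classical_set_scope.

Section GSlim.
Variables (R : realType) (T : Type) (F : set_system T).
Context {FF : Filter F}.

Lemma cvg_dot n (f g : T -> 'rV[R]_n) u v : mcvg F f u -> mcvg F g v ->
  (fun x => dot (f x) (g x)) @ F --> dot u v.
Proof.
move=> hf hg; rewrite /dot; apply: (mcvg_mul hf (mcvg_tr hg)).
Qed.

Lemma gs_lim n (w : T -> nat -> 'rV[R]_n) (p : nat -> 'rV[R]_n) K :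
  (forall i j, (i < K)%N -> (j < K)%N -> dot (p i) (p j) = (i == j)%:R) ->
  (forall k, (k < K)%N -> mcvg F (fun x => w x k) (p k)) ->
  forall k, (k < K)%N -> mcvg F (fun x => gq (w x) k) (p k) /\
     (fun x => dot (gsu (w x) k) (gsu (w x) k)) @ F --> (1 : R).
Proof.
move=> orth hw; elim/ltn_ind => k IH kK.
have hu : mcvg F (fun x => gsu (w x) k) (p k).
  have e0 : \sum_(j < k) dot (p k) (p j) *: p j = 0.
    apply: big1 => j _; have jK : (j < K)%N := ltn_trans (ltn_ord j) kK.
    by rewrite orth // eq_sym (ltn_eqF (ltn_ord j)) scale0r.
  have -> : p k = p k - \sum_(j < k) dot (p k) (p j) *: p j by rewrite e0 subr0.
  rewrite /gsu; apply: mcvgB; first exact: hw.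
  apply: mcvg_sum => j _; apply: mcvgZ; last by case: (IH j (ltn_ord j) (ltn_trans (ltn_ord j) kK)).
  apply: cvg_dot; first exact: hw.
  by case: (IH j (ltn_ord j) (ltn_trans (ltn_ord j) kK)).
have hd : (fun x => dot (gsu (w x) k) (gsu (w x) k)) @ F --> (1 : R).
  by have h1 := cvg_dot hu hu; rewrite (orth k k kK kK) eqxx in h1.
split => //.
under eq_fun do rewrite gqE.
have h : (fun x => (Num.sqrt (dot (gsu (w x) k) (gsu (w x) k)))^-1) @ F --> (1 : R).
  have e : (Num.sqrt (1:R))^-1 = 1 by rewrite sqrtr1 invr1.
  have h := cvgVR _ (cvgsqrtR hd); rewrite e in h; apply: h.
  by rewrite sqrtr1 oner_neq0.
by have := mcvgZ h hu; rewrite scale1r; apply.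
Qed.

End GSlim.

Close Scope classical_set_scope.

Open Scope classical_set_scope.

Section Helpers.
Variable R : realType.

Lemma hchar n (A : 'M[R]_n) x : (char_poly A).[x] = \det (x%:M - A).
Proof.
rewrite /char_poly -[_.[x]]/(horner_eval x _) -det_map_mx; congr (\det _).
by apply/matrixP => i j; rewrite !mxE /= horner_evalE hornerD hornerN hornerMn hornerX hornerC.
Qed.

Lemma lb_pos (t : seq R) : (forall z, z \in t -> 0 < z) ->
  exists m : R, 0 < m /\ forall z, z \in t -> m <= z.
Proof.
elim: t => [|z t IH] H; first by exists 1; split.
have [m [m0 hm]] := IH (fun y yt => H y (introT orP (or_intror yt))).
have z0 : 0 < z by apply: H; rewrite inE eqxx.
exists (Num.min z m); split; first by rewrite lt_min z0 m0.
move=> y; rewrite inE => /orP [/eqP -> | yt]; first by rewrite ge_min lexx.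
by rewrite ge_min hm ?orbT.
Qed.

Lemma gap_exists (a : seq R) : exists g : R, 0 < g /\
  forall x y, x \in a -> y \in a -> x != y -> g *+ 2 <= `|x - y|.
Proof.
pose t := [seq `|p.1 - p.2| | p <- [seq (x, y) | x <- a, y <- a] & p.1 != p.2].
have [|m [m0 hm]] := lb_pos (t := t).
  move=> z /mapP [[x y] /= + ->]; rewrite mem_filter /= => /andP [xy _].
  by rewrite normr_gt0 subr_eq0.
exists (m / 2); split; first by rewrite divr_gt0.
move=> x y xa ya xy; rewrite mulr2n -splitr.
apply: hm; apply/mapP; exists (x, y) => //.
by rewrite mem_filter /= xy; apply/allpairsP; exists (x, y).
Qed.

Lemma prod_lb (s : seq R) x eta : 0 <= eta -> (forall z, z \in s -> eta <= `|z - x|) ->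
  eta ^+ size s <= `|\prod_(z <- s) (x - z)|.
Proof.
move=> e0; elim: s => [|z s IH] H; first by rewrite big_nil normr1 expr0.
rewrite big_cons normrM /= exprS; apply: ler_pM => //; first exact: exprn_ge0.
  by rewrite distrC; apply: H; rewrite inE eqxx.
by apply: IH => y ys; apply: H; rewrite inE ys orbT.
Qed.

Definition bsel n (B : 'M[R]_n) (g x : R) : R :=
  match pselect (exists z, eigenvalue B z /\ `|z - x| < g) with
  | left e => proj1_sig (cid e)
  | right _ => x
  end.

Lemma bselP n (B : 'M[R]_n) g x : (exists z, eigenvalue B z /\ `|z - x| < g) ->
  eigenvalue B (bsel B g x) /\ `|bsel B g x - x| < g.
Proof. by rewrite /bsel; case: pselect => // e _; exact: (proj2_sig (cid e)). Qed.

Lemma U_facts n (B : 'M[R]_n) (a : seq R) g (L : nat) :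
  uniq a -> size a = L ->
  (forall x y, x \in a -> y \in a -> x != y -> g *+ 2 <= `|x - y|) ->
  (exists s, char_poly B = \prod_(z <- s) ('X - z%:P) /\ (size (undup s) <= L)%N) ->
  (forall x, x \in a -> exists z, eigenvalue B z /\ `|z - x| < g) ->
  [/\ forall z, eigenvalue B z -> exists2 x, x \in a & z = bsel B g x,
      forall x, x \in a -> forall z, eigenvalue B z -> `|z - x| < g -> z = bsel B g x &
      uniq (map (bsel B g) a)].
Proof.
move=> ua sa gap [s [cs ss]] hw.
have far : forall x y z, x \in a -> y \in a -> `|z - x| < g -> `|z - y| < g -> x = y.
  move=> x y z xa ya hx hy; apply/eqP; apply: contraT => xy.
  have := gap x y xa ya xy.
  have : `|x - y| <= `|z - x| + `|z - y| by rewrite (distrC z x); apply: ler_distD.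
  move=> h1 h2; have := le_trans h2 h1; rewrite mulr2n.
  by move/(lt_le_trans (ltrD hx hy)); rewrite ltxx.
have uq : uniq (map (bsel B g) a).
  rewrite map_inj_in_uniq // => x y xa ya e.
  have [_ hx] := bselP (hw x xa); have [_ hy] := bselP (hw y ya).
  by apply: (far x y (bsel B g x)) => //; rewrite e.
have i1 : forall z, eigenvalue B z -> exists2 x, x \in a & z = bsel B g x.
  have sub : {subset map (bsel B g) a <= undup s}.
    move=> y /mapP [x xa ->]; have [ex _] := bselP (hw x xa).
    by move: ex; rewrite eigenvalue_root_char cs root_prod_XsubC mem_undup.
  have sz : (size (undup s) <= size (map (bsel B g) a))%N by rewrite size_map sa.
  have [_ e] := uniq_min_size uq sub sz.
  move=> z; rewrite eigenvalue_root_char cs root_prod_XsubC -mem_undup -e.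
  by move/mapP => [x xa ->]; exists x.
split => // x xa z ez hz.
have [y ya ezy] := i1 z ez; rewrite ezy in hz *.
have [_ hy] := bselP (hw y ya).
by rewrite (far x y (bsel B g y) xa ya hz hy).
Qed.

End Helpers.

Close Scope classical_set_scope.

Open Scope classical_set_scope.

Section Near.
Variables (R : realType) (n : nat) (F : set_system 'M[R]_n.+1).
Context {FF : Filter F}.

Lemma near_seq (I : eqType) (t : seq I) (Pr : I -> 'M[R]_n.+1 -> Prop) :
  (forall i, i \in t -> \forall B \near F, Pr i B) ->
  \forall B \near F, forall i, i \in t -> Pr i B.
Proof.
elim: t => [|i t IH] H; first by apply: filterE.
have h1 := H i (mem_head _ _).
have h2 := IH (fun j jt => H j (introT orP (or_intror jt))).
apply: filterS2 h1 h2 => B p1 p2 j; rewrite inE => /orP [/eqP -> //|]; exact: p2.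
Qed.

Lemma near_eig (A : 'M[R]_n.+1) x (eta : R) :
  mcvg F (fun B => B) A ->
  (\forall B \near F, exists s : seq R, char_poly B = \prod_(z <- s) ('X - z%:P)) ->
  eigenvalue A x -> 0 < eta -> \forall B \near F, exists z, eigenvalue B z /\ `|z - x| < eta.
Proof.
move=> hA hS ex e0.
have hd : (fun B => \det (x%:M - B)) @ F --> \det (x%:M - A).
  apply: cvg_det; apply: mcvgB => //; apply: mcvg_scalar; exact: cvgcR.
have dA : \det (x%:M - A) = 0.
  by rewrite -hchar; apply/eqP; move: ex; rewrite eigenvalue_root_char.
rewrite dA in hd.
move/cvgrPdist_lt: hd => /(_ (eta ^+ n.+1) (exprn_gt0 _ e0)) hn.
apply: filterS2 hn hS => B h1 [s hs].
have ss : size s = n.+1.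
  by have := size_char_poly B; rewrite hs size_prod_XsubC => -[].
have [/hasP [z zs hz]|hno] := boolP (has (fun z => `|z - x| < eta) s).
  by exists z; split => //; rewrite eigenvalue_root_char hs root_prod_XsubC.
exfalso.
have lb : eta ^+ size s <= `|\prod_(z <- s) (x - z)|.
  apply: prod_lb; first exact: ltW.
  by move=> z zs; rewrite leNgt; apply/negP => hz; move/hasP: hno; apply; exists z.
move: h1; rewrite sub0r normrN -hchar hs horner_prod.
under eq_bigr do rewrite hornerXsubC.
by rewrite -ss => h; move: (le_lt_trans lb h); rewrite ltxx.
Qed.

End Near.

Close Scope classical_set_scope.

Open Scope classical_set_scope.

Section Alg2.
Variables (R : realType) (n : nat).

Lemma prod_eig (A : 'M[R]_n.+1) (v : 'rV[R]_n.+1) x (t : seq R) (Pr : pred R) :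
  v *m A = x *: v ->
  v *m \prod_(y <- t | Pr y) (A - y%:M) = (\prod_(y <- t | Pr y) (x - y)) *: v.
Proof.
move=> hv; elim: t => [|y t IH]; first by rewrite !big_nil scale1r mulmx1.
rewrite !big_cons; case: (Pr y) => //.
rewrite -[(A - y%:M) * _]/((A - y%:M) *m _) mulmxA mulmxBr hv mul_mx_scalar.
by rewrite -scalerBl -scalemxAl IH scalerA.
Qed.

Lemma comm_sc (M : 'M[R]_n.+1) c : GRing.comm M c%:M.
Proof. exact: scalar_mxC. Qed.

Lemma commBB (B : 'M[R]_n.+1) c d : GRing.comm (B - c%:M) (B - d%:M).
Proof.
have hB : GRing.comm (B - d%:M) B.
  by apply: commr_sym; apply: commrB; [by [] | exact: comm_sc].
have hc : GRing.comm (B - d%:M) c%:M by exact: comm_sc.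
by apply: commr_sym; apply: commrB.
Qed.

Lemma comm_prodB (B : 'M[R]_n.+1) c (t : seq R) (Pr : pred R) (f : R -> R) :
  GRing.comm (B - c%:M) (\prod_(y <- t | Pr y) (B - (f y)%:M)).
Proof. by apply: commr_prod => y _; exact: commBB. Qed.

Lemma hprod (B : 'M[R]_n.+1) (t : seq R) (Pr : pred R) (f : R -> R) :
  horner_mx B (\prod_(y <- t | Pr y) ('X - (f y)%:P)) = \prod_(y <- t | Pr y) (B - (f y)%:M).
Proof.
by rewrite rmorph_prod; apply: eq_bigr => y _; rewrite rmorphB /= horner_mx_X horner_mx_C.
Qed.

End Alg2.

Section MainGen.
Variables (R : realType) (n : nat) (F : set_system 'M[R]_n.+1).
Context {FF : Filter F}.

Lemma main_gen (A P D : 'M[R]_n.+1) (a : seq R) (L : nat) (eps : R) :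
  mcvg F (fun B => B) A ->
  P *m P^T = 1%:M -> is_diag_mx D -> A = P *m D *m P^T ->
  uniq a -> size a = L -> (forall z, eigenvalue A z <-> z \in a) ->
  (\forall B \near F, B^T = B /\ exists s, char_poly B = \prod_(z <- s) ('X - z%:P)
        /\ (size (undup s) <= L)%N) ->
  0 < eps ->
  \forall B \near F, n_distinct_eigs B L /\ exists Q F' : 'M[R]_n.+1,
     [/\ orthogonal_mx Q, is_diag_mx F', B = Q *m F' *m Q^T,
         (forall i, `|D i i - F' i i| < eps) & (forall i j, `|Q i j - P i j| < eps)].
Proof.
move=> hA hP hD eA ua sa ea hS e0.
have [g [g0 gap]] := gap_exists a.
have hS' : \forall B \near F, exists s : seq R, char_poly B = \prod_(z <- s) ('X - z%:P).
  by apply: filterS hS => B [_ [s [h _]]]; exists s.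
have hev : forall x, x \in a -> \forall B \near F, exists z, eigenvalue B z /\ `|z - x| < g.
  by move=> x xa; apply: near_eig => //; apply/ea.
have hU : \forall B \near F, (B^T = B /\ exists s, char_poly B = \prod_(z <- s) ('X - z%:P)
        /\ (size (undup s) <= L)%N) /\ (forall x, x \in a -> exists z, eigenvalue B z /\ `|z - x| < g).
  have h2 := @near_seq _ _ _ FF _ _ _ hev.
  exact: (filterS2 FF (fun B (h1 : _) (h2 : _) => conj h1 h2) hS h2).
have hb : forall x, x \in a -> (fun B => bsel B g x) @ F --> x.
  move=> x xa; apply/cvgrPdist_lt => e e1.
  have mg : 0 < Num.min e g by rewrite lt_min e1 g0.
  have hn := @near_eig _ _ _ FF _ _ _ hA hS' (proj2 (ea x) xa) mg.
  apply: (filterS2 FF _ hU hn) => B [[sB hs] hw] [z [ez hz]].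
  have [_ i2 _] := U_facts ua sa gap hs hw.
  move: hz; rewrite lt_min => /andP [h1 h2].
  by rewrite -(i2 x xa z ez h2) distrC.
have hPP : P^T *m P = 1%:M := mulmx1C hP.
have [dv Ddv] : exists d, D = diag_mx d by apply/diag_mxP.
have Dii : forall i, D i i = dv 0 i by move=> i; rewrite Ddv mxE eqxx mulr1n.
have hAe : forall i : 'I_n.+1, row i P^T *m A = D i i *: row i P^T.
  move=> i; rewrite eA !mulmxA -!row_mul hPP mul1mx Ddv mul_diag_mx.
  by apply/rowP => j; rewrite !mxE eqxx mulr1n.
have horth : forall i j : 'I_n.+1, dot (row i P^T) (row j P^T) = (i == j)%:R.
  move=> i j; have := congr1 (fun M : 'M[R]_n.+1 => M i j) hPP; rewrite !mxE => <-.
  by rewrite /dot mxE; apply: eq_bigr => k _; rewrite !mxE.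
have hDa : forall i, D i i \in a.
  move=> i; apply/ea; apply/eigenvalueP; exists (row i P^T); first exact: hAe.
  apply/eqP => h0; have := horth i i; rewrite h0 eqxx /dot mul0mx mxE => /eqP.
  by rewrite eq_sym oner_eq0.
pose p k := row (inord k : 'I_n.+1) P^T.
pose dk k := D (inord k : 'I_n.+1) (inord k).
have horth' : forall i j, (i < n.+1)%N -> (j < n.+1)%N -> dot (p i) (p j) = (i == j)%:R.
  move=> i j hi hj; rewrite /p horth; congr (_%:R).
  by rewrite -(inj_eq val_inj) /= !inordK.
pose Pi (B : 'M[R]_n.+1) (x : R) :=
  (\prod_(y <- a | y != x) (bsel B g x - bsel B g y))^-1 *:
    \prod_(y <- a | y != x) (B - (bsel B g y)%:M).
pose w B k := p k *m Pi B (dk k).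
have hwl : forall k, (k < n.+1)%N -> mcvg F (fun B => w B k) (p k).
  move=> k kn; have xa : dk k \in a by apply: hDa.
  have -> : p k = p k *m ((\prod_(y <- a | y != dk k) (dk k - y))^-1 *:
                         \prod_(y <- a | y != dk k) (A - y%:M)).
    rewrite -scalemxAr (prod_eig _ _ (hAe _)).
    rewrite scalerA mulVf ?scale1r //.
    rewrite prodf_seq_neq0; apply/allP => y _; apply/implyP.
    by rewrite subr_eq0 eq_sym.
  apply: mcvg_mul; first exact: mcvg_cst.
  apply: mcvgZ.
    apply: cvgVR.
      rewrite prodf_seq_neq0; apply/allP => y _; apply/implyP.
      by rewrite subr_eq0 eq_sym.
    apply: cvg_prodR => y ya; apply: cvgDR; first exact: hb.
    by apply: cvgNR; apply: hb.
  apply: mcvg_prod => y ya; apply: mcvgB; first exact: hA.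
  by apply: mcvg_scalar; apply: hb.
have hgs := @gs_lim _ _ _ FF _ _ _ _ horth' hwl.
have E2 : \forall B \near F, forall k : 'I_n.+1, 0 < dot (gsu (w B) k) (gsu (w B) k).
  apply: filter_forall => k; have [_ h] := hgs k (ltn_ord k).
  move/cvgrPdist_lt: h => /(_ 1 ltr01); apply: filterS => B.
  by rewrite ltr_norml => /andP [h1 h2]; lra.
have E3 : \forall B \near F, forall i : 'I_n.+1, `|D i i - bsel B g (D i i)| < eps.
  by apply: filter_forall => i; move/cvgrPdist_lt: (hb _ (hDa i)) => /(_ eps e0).
have E4 : \forall B \near F, forall i j : 'I_n.+1, `|gq (w B) j 0 i - P i j| < eps.
  apply: filter_forall => i; apply: filter_forall => j.
  have [h _] := hgs j (ltn_ord j); move/cvgrPdist_lt: (h 0 i) => /(_ eps e0).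
  apply: filterS => B; rewrite /p !mxE inord_val => hh; by rewrite distrC.
have E := filterS2 FF (fun B h1 h2 => conj h1 h2) E2 (filterS2 FF (fun B h1 h2 => conj h1 h2) E3 E4).
apply: (filterS2 FF _ hU E) => B [[sB hs] hw] [pos [cD cQ]].
have [i1 i2 uq] := U_facts ua sa gap hs hw.
split.
  exists (map (bsel B g) a); split; first exact: uq.
  split; first by rewrite size_map.
  move=> z; split => [/i1 [x xa ->]|/mapP [x xa ->]]; first exact: map_f.
  exact: (bselP (hw x xa)).1.
have q0 : \prod_(y <- a) (B - (bsel B g y)%:M) = 0.
  have [s [cs _]] := hs.
  rewrite -(big_map (bsel B g) xpredT (fun y => B - y%:M)); apply: (qB0 sB cs) => z zs.
  have : eigenvalue B z by rewrite eigenvalue_root_char cs root_prod_XsubC.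
  by move/i1 => [x xa ->]; exact: map_f.
have hPi : forall x, x \in a -> Pi B x *m B = bsel B g x *: Pi B x.
  move=> x xa.
  have h0 : Pi B x *m (B - (bsel B g x)%:M) = 0.
    rewrite /Pi -scalemxAl.
    rewrite -[(\prod_(y <- a | y != x) _) *m _]/((\prod_(y <- a | y != x) (B - (bsel B g y)%:M)) * (B - (bsel B g x)%:M)).
    have e : (B - (bsel B g x)%:M) * \prod_(y <- a | y != x) (B - (bsel B g y)%:M) = 0.
      rewrite -q0 -[RHS]hprod (bigD1_seq x) //= rmorphM /= hprod rmorphB /=.
      by rewrite horner_mx_X horner_mx_C.
    by rewrite -comm_prodB e scaler0.
  by move: h0; rewrite mulmxBr mul_mx_scalar => /eqP; rewrite subr_eq0 => /eqP.
pose be k := bsel B g (dk k).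
have hwe : forall k, w B k *m B = be k *: w B k.
  by move=> k; rewrite /w -mulmxA hPi ?hDa // scalemxAr.
have geig := gs_eig sB hwe.
have gorth := gs_orth (w := w B) (K := n.+1) (fun k kn => pos (Ordinal kn)).
pose Qt : 'M[R]_n.+1 := \matrix_(i < n.+1, j < n.+1) gq (w B) i 0 j.
have hQQ : Qt *m Qt^T = 1%:M.
  apply/matrixP => i j; rewrite !mxE.
  have := gorth i j (ltn_ord i) (ltn_ord j); rewrite /dot mxE => <-.
  by apply: eq_bigr => k _; rewrite !mxE.
exists Qt^T, (diag_mx (\row_i bsel B g (D i i))); split.
- by rewrite /orthogonal_mx trmxK; exact: mulmx1C hQQ.
- exact: diag_mx_is_diag.
- rewrite trmxK.
  have hFQ : diag_mx (\row_i bsel B g (D i i)) *m Qt = Qt *m B.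
    rewrite mul_diag_mx; apply/matrixP => i j; rewrite !mxE.
    have := congr1 (fun M : 'rV[R]_n.+1 => M 0 j) (geig i); rewrite !mxE => hh.
    rewrite (eq_bigr (fun k => gq (w B) i 0 k * B k j)); last by move=> k _; rewrite /Qt mxE.
    by rewrite hh /be /dk inord_val.
  by rewrite -mulmxA hFQ mulmxA (mulmx1C hQQ) mul1mx.
- by move=> i; rewrite !mxE eqxx mulr1n.
- by move=> i j; rewrite !mxE.
Qed.

End MainGen.

Close Scope classical_set_scope.

Lemma ballE (R : realType) n (A B : 'M[R]_n) e : 0 < e -> (forall i j, `|A i j - B i j| < e) -> ball A e B.
Proof. move=> e0 h; rewrite /ball /=; split => // i j; exact: h. Qed.

Unset Implicit Arguments. Set Strict Implicit.

Theorem lemma3p3 (R : realType) (d r : nat) (lv : 'I_r -> nat)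
  (A P D : 'M[R]_d) :
  (2 <= d)%N -> (1 <= r)%N ->
  (forall j, 1 <= lv j <= d)%N ->
  (\sum_(j < r) lv j <= d)%N ->
  in_S lv A ->
  orthogonal_mx P -> is_diag_mx D -> A = P *m D *m P^T ->
  n_distinct_eigs A (d - \sum_(j < r) (lv j).-1)%N ->
  forall eps : R, 0 < eps ->
  exists delta : R, 0 < delta /\
    forall B : 'M[R]_d, in_S lv B ->
      (forall i j, `|A i j - B i j| < delta) ->
      n_distinct_eigs B (d - \sum_(j < r) (lv j).-1)%N /\
      exists Q F : 'M[R]_d,
        [/\ orthogonal_mx Q, is_diag_mx F, B = Q *m F *m Q^T,
            (forall i, `|D i i - F i i| < eps) &
            (forall i j, `|Q i j - P i j| < eps)].
Proof.
case: d A P D => [|n] A P D //.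
move=> _ _ hlv _ _ hP hD eA [a [ua [sa ea]]] eps e0.
set L := (n.+1 - _)%N in sa *.
pose Fl := within (in_S lv) (nbhs A).
have FFl : Filter Fl by apply: within_filter.
have hAid : mcvg Fl (fun B => B) A.
  move=> i j; apply: cvg_within_filter; exact: (@coord_continuous R _ _ i j A).
have hS : \forall B \near Fl, B^T = B /\ exists s, char_poly B = \prod_(z <- s) ('X - z%:P)
        /\ (size (undup s) <= L)%N.
  apply: filterS (near_withinT (in_S lv) _) => B [sB [s [[_ cs] [J [cJ [dJ cst]]]]]].
  split => //; exists s; split => //.
  have ss : size s = n.+1.
    by have := size_char_poly B; rewrite cs size_prod_XsubC => -[].
  apply: (count_distinct ss _ cJ dJ cst) => j; by case/andP: (hlv j).
have := @main_gen R n Fl FFl A P D a L eps hAid hP hD eA ua sa ea hS e0.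
rewrite /Fl /within /= => /nbhs_ballP [del del0 hdel].
exists del; split => // B hB hAB.
apply: (hdel B) => //; exact: ballE.
Qed.
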